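(* Consider a ring road of length $L>0$ whose traffic is described by the LWR model with triangular fundamental diagram $Q(k)=\min\{Vk,(K-k)W\}$ ($V,W,K>0$), capacity $C=V\bar K$ with $\bar K=\frac{W}{V+W}K$, constant initial density $k_0\in[0,K]$, and a pretimed signal at $x=0$ (identified with $x=L$) with cycle length $T>0$ and effective green ratio $\pi\in(0,1)$, so that $\beta(t)=1$ if $t-iT\in[0,\pi T]$ for some integer $i\ge 0$ and $\beta(t)=0$ otherwise. Let $G(t)$ be the boundary flow given by the continuous link transmission model described in the context. Then at a large time $t$, $G$ is determined by $$G(t)=\min\Big\{G\big(t-\tfrac LV\big)+k_0L,\; G\big(t-\tfrac LW\big)+(K-k_0)L,\; G(iT)+(t-iT)C\Big\}$$ for $t-iT\in(0,\pi T]$ (effective green intervals), and $$G(t)=G((i+\pi)T)$$ for $t-iT\in(\pi T,T]$ (effective red intervals).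
   Context: Continuous link transmission model (LTM) for the signalized ring road: $G(t)$ is the cumulative number of vehicles that have passed the signal location $x=0$ by time $t$, with $G(0)=0$, and $g(t)=G'(t)$. Let $H(z)=0$ if $z=0$ and $H(z)=+\infty$ if $z>0$. The demand is $d(t)=\min\{k_0V+H(\lambda(t)),C\}$ for $t\le L/V$ and $d(t)=\min\{g(t-L/V)+H(\lambda(t)),C\}$ for $t>L/V$, where the queue size is $\lambda(t)=k_0Vt-G(t)$ for $t\le L/V$ and $\lambda(t)=G(t-L/V)-G(t)+k_0L$ for $t>L/V$. The supply is $s(t)=\min\{(K-k_0)W+H(\gamma(t)),C\}$ for $t\le L/W$ and $s(t)=\min\{g(t-L/W)+H(\gamma(t)),C\}$ for $t>L/W$, where the vacancy size is $\gamma(t)=(K-k_0)Wt-G(t)$ for $t\le L/W$ and $\gamma(t)=G(t-L/W)-G(t)+(K-k_0)L$ for $t>L/W$. The boundary flow-rate is $g(t)=\beta(t)\min\{d(t),s(t)\}$. (The discrete version with step $\Delta t$ replaces $H(z)\Delta t$ by $z$: $G(t+\Delta t)=G(t)+\beta(t)\min\{d(t)\Delta t,s(t)\Delta t\}$ with $d(t)\Delta t=\min\{G(t+\Delta t-L/V)+k_0L-G(t),C\Delta t\}$ and $s(t)\Delta t=\min\{G(t+\Delta t-L/W)+(K-k_0)L-G(t),C\Delta t\}$ for large $t$.) *)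

(* Defs.v *)
From Stdlib Require Import Reals.
From Coquelicot Require Import Coquelicot.
Open Scope R_scope.

Definition capacity (V W K : R) : R := V * (W / (V + W) * K).

Definition green (T p t : R) : Prop :=
  exists i : nat, 0 <= t - INR i * T <= p * T.

Definition queue (L V k0 : R) (G : R -> R) (t : R) : R :=
  if Rle_dec t (L / V) then k0 * V * t - G t else G (t - L / V) - G t + k0 * L.

Definition vacancy (L W K k0 : R) (G : R -> R) (t : R) : R :=
  if Rle_dec t (L / W) then (K - k0) * W * t - G t
  else G (t - L / W) - G t + (K - k0) * L.

(* Demand d(t) = min{ k0 V + H(lambda), C } (resp. g(t-L/V) + H(lambda)),
   with H(z) = 0 if z = 0 and +oo if z > 0: so d = C whenever lambda > 0. *)
Definition demand (L V W K k0 : R) (G g : R -> R) (t : R) : R :=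
  if Rlt_dec 0 (queue L V k0 G t) then capacity V W K
  else if Rle_dec t (L / V) then Rmin (k0 * V) (capacity V W K)
  else Rmin (g (t - L / V)) (capacity V W K).

(* Supply s(t), analogously with H(gamma). *)
Definition supply (L V W K k0 : R) (G g : R -> R) (t : R) : R :=
  if Rlt_dec 0 (vacancy L W K k0 G t) then capacity V W K
  else if Rle_dec t (L / W) then Rmin ((K - k0) * W) (capacity V W K)
  else Rmin (g (t - L / W)) (capacity V W K).

Definition LTM_solution (L V W K k0 T p : R) (G g : R -> R) : Prop :=
  (forall t, 0 <= t -> is_RInt g 0 t (G t)) /\
  (forall t, 0 <= t ->
     (green T p t -> g t = Rmin (demand L V W K k0 G g t) (supply L V W K k0 G g t)) /\
     (~ green T p t -> g t = 0)).

(* Main.v *)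
Require Import Defs.
From Stdlib Require Import Reals Lra Lia Classical ZArith.
From Coquelicot Require Import Coquelicot.
Open Scope R_scope.

Lemma nat_unbounded (r : R) : exists n : nat, r < INR n.
Proof.
  destruct (archimed r) as [H1 _].
  exists (Z.to_nat (up r)).
  destruct (Z_le_gt_dec 0 (up r)) as [h|h].
  - rewrite INR_IZR_INZ, Z2Nat.id by lia; lra.
  - assert (e : Z.to_nat (up r) = 0%nat) by (destruct (up r); simpl; lia).
    rewrite e. simpl. apply Z.gt_lt, IZR_lt in h. lra.
Qed.

Lemma int_le (g : R -> R) a b I k : a <= b -> is_RInt g a b I ->
  (forall x, a < x < b -> g x <= k) -> I <= k * (b - a).
Proof.
  intros hab HI Hk.
  pose proof (is_RInt_le g (fun _ => k) a b I _ hab HI (is_RInt_const a b k) Hk).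
  change (scal (b - a) k) with ((b - a) * k) in H. lra.
Qed.

Lemma int_ge (g : R -> R) a b I k : a <= b -> is_RInt g a b I ->
  (forall x, a < x < b -> k <= g x) -> k * (b - a) <= I.
Proof.
  intros hab HI Hk.
  pose proof (is_RInt_le (fun _ => k) g a b _ I hab (is_RInt_const a b k) HI Hk).
  change (scal (b - a) k) with ((b - a) * k) in H. lra.
Qed.

Lemma Gdiff (G g : R -> R) x y : (forall t, 0 <= t -> is_RInt g 0 t (G t)) ->
  0 <= x -> 0 <= y -> is_RInt g x y (G y - G x).
Proof.
  intros H hx hy.
  pose proof (is_RInt_Chasles g x 0 y _ _ (is_RInt_swap _ _ _ _ (H x hx)) (H y hy)).
  change (plus (opp (G x)) (G y)) with (- G x + G y) in H0.
  replace (G y - G x) with (- G x + G y) by ring. exact H0.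
Qed.

Lemma G0 (G g : R -> R) : is_RInt g 0 0 (G 0) -> G 0 = 0.
Proof.
  intros H.
  pose proof (int_le g 0 0 _ 0 (Rle_refl 0) H ltac:(intros; lra)).
  pose proof (int_ge g 0 0 _ 0 (Rle_refl 0) H ltac:(intros; lra)). lra.
Qed.

Lemma Rmin_lip a b c d : Rabs (Rmin a b - Rmin c d) <= Rabs (a - c) + Rabs (b - d).
Proof.
  unfold Rmin; destruct (Rle_dec a b); destruct (Rle_dec c d);
  unfold Rabs; repeat destruct Rcase_abs; lra.
Qed.

Lemma crossing (f : R -> R) (M a b : R) : a <= b -> 0 <= f a ->
  (forall x y, a <= x <= b -> a <= y <= b -> Rabs (f y - f x) <= M * Rabs (y - x)) ->
  exists c, a <= c <= b /\ 0 <= f c /\ forall s, c < s <= b -> f s < 0.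
Proof.
  intros hab hfa Hl.
  set (E := fun x => a <= x <= b /\ 0 <= f x).
  assert (hb : bound E) by (exists b; intros x [hx _]; lra).
  assert (he : exists x, E x) by (exists a; split; lra).
  destruct (completeness E hb he) as [c [Hub Hlub]].
  assert (hac : a <= c) by (apply Hub; split; lra).
  assert (hcb : c <= b) by (apply Hlub; intros x [hx _]; lra).
  exists c. split; [lra|]. split.
  - destruct (Rle_lt_dec 0 (f c)) as [h|h]; [exact h|exfalso].
    assert (hca : a < c) by (destruct (Req_dec a c); [subst; lra| lra]).
    set (M' := Rabs M + 1).
    assert (hM' : 0 < M') by (unfold M'; pose proof (Rabs_pos M); lra).
    set (d := Rmin ((- f c) / M' / 2) ((c - a) / 2)).
    assert (hd : 0 < d).
    { unfold d. apply Rmin_glb_lt; [|lra]. apply Rmult_lt_0_compat; [|lra].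
      apply Rdiv_lt_0_compat; lra. }
    assert (hdl1 : d <= (- f c) / M' / 2) by apply Rmin_l.
    assert (hdl2 : d <= (c - a) / 2) by apply Rmin_r.
    assert (c <= c - d); [|lra].
    apply Hlub. intros x [hx hfx].
    destruct (Rle_lt_dec x (c - d)) as [h1|h1]; [exact h1|exfalso].
    assert (hxc : x <= c) by (apply Hub; split; assumption).
    pose proof (Hl x c hx (conj hac hcb)).
    rewrite (Rabs_right (c - x)) in H by lra.
    assert (hA : Rabs (f c - f x) <= M' * (c - x)).
    { apply Rle_trans with (M * (c - x)); [exact H|].
      apply Rmult_le_compat_r; [lra|]. unfold M'. pose proof (Rle_abs M). lra. }
    assert (hB : M' * (c - x) < M' * ((- f c) / M')).
    { apply Rmult_lt_compat_l; [lra|]. lra. }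
    replace (M' * ((- f c) / M')) with (- f c) in hB by (field; lra).
    rewrite Rabs_minus_sym in hA.
    pose proof (Rle_abs (f x - f c)). lra.
  - intros s hs. destruct (Rle_lt_dec 0 (f s)) as [h|h]; [|exact h].
    exfalso. assert (s <= c) by (apply Hub; split; lra). lra.
Qed.

Definition DD L Vx kx Cap (G g : R -> R) t :=
  if Rlt_dec 0 (queue L Vx kx G t) then Cap
  else if Rle_dec t (L / Vx) then Rmin (kx * Vx) Cap
  else Rmin (g (t - L / Vx)) Cap.

Definition inflow L Vx kx (g : R -> R) u :=
  if Rle_dec u (L / Vx) then kx * Vx else g (u - L / Vx).


Lemma Q_le L Vx kx G u : 0 < Vx -> 0 < L -> u <= L / Vx -> queue L Vx kx G u = kx * Vx * u - G u.
Proof. intros. unfold queue. destruct Rle_dec; [reflexivity|lra]. Qed.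

Lemma Q_ge L Vx kx G g u : 0 < Vx -> 0 < L -> is_RInt g 0 0 (G 0) -> L / Vx <= u ->
  queue L Vx kx G u = G (u - L / Vx) - G u + kx * L.
Proof.
  intros hV hL h0 hu. unfold queue. destruct Rle_dec; [|reflexivity].
  assert (u = L / Vx) by lra. subst u. replace (L / Vx - L / Vx) with 0 by ring.
  rewrite (G0 G g h0). field. lra.
Qed.

Lemma G_lip (G g : R -> R) Cap x y : (forall t, 0 <= t -> is_RInt g 0 t (G t)) ->
  (forall t, 0 <= t -> 0 <= g t <= Cap) -> 0 <= x <= y ->
  0 <= G y - G x <= Cap * (y - x).
Proof.
  intros H Hb hxy. pose proof (Gdiff G g x y H ltac:(lra) ltac:(lra)).
  split.
  - pose proof (int_ge g x y _ 0 ltac:(lra) H0 ltac:(intros u hu; apply Hb; lra)). lra.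
  - apply (int_le g x y _ Cap ltac:(lra) H0). intros u hu; apply Hb; lra.
Qed.

Lemma Q_lip L Vx kx Cap (G g : R -> R) x y : 0 < Vx -> 0 < L -> 0 <= kx ->
  (forall t, 0 <= t -> is_RInt g 0 t (G t)) ->
  (forall t, 0 <= t -> 0 <= g t <= Cap) -> 0 <= x -> 0 <= y ->
  Rabs (queue L Vx kx G y - queue L Vx kx G x) <= (kx * Vx + 2 * Cap) * Rabs (y - x).
Proof.
  intros hV hL hk H Hb.
  assert (hC : 0 <= Cap) by (pose proof (Hb 0 (Rle_refl 0)); lra).
  assert (key : forall x y, 0 <= x <= y ->
    Rabs (queue L Vx kx G y - queue L Vx kx G x) <= (kx * Vx + 2 * Cap) * Rabs (y - x)).
  { clear x y. intros x y hxy. rewrite (Rabs_right (y - x)) by lra.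
    set (a := L / Vx). assert (ha : 0 < a) by (apply Rdiv_lt_0_compat; lra).
    assert (hLa : L = Vx * a) by (unfold a; field; lra).
    pose proof (G_lip G g Cap x y H Hb hxy).
    assert (hkv : 0 <= kx * Vx) by (apply Rmult_le_pos; lra).
    assert (e1 : kx * L = kx * Vx * a) by (rewrite hLa; ring).
    apply Rabs_le.
    destruct (Rle_dec y a).
    - rewrite !(Q_le L Vx kx G) by (unfold a in *; lra).
      assert (kx * Vx * (y - x) <= kx * Vx * (y - x)) by lra.
      assert (0 <= kx * Vx * (y - x)) by (apply Rmult_le_pos; lra).
      replace (kx * Vx * y - G y - (kx * Vx * x - G x)) with (kx * Vx * (y - x) - (G y - G x)) by ring.
      assert (0 <= Cap * (y - x)) by (apply Rmult_le_pos; lra).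
      replace ((kx * Vx + 2 * Cap) * (y - x)) with (kx * Vx * (y - x) + 2 * (Cap * (y - x))) by ring.
      lra.
    - destruct (Rle_dec x a).
      + rewrite (Q_le L Vx kx G x) by (unfold a in *; lra).
        rewrite (Q_ge L Vx kx G g y) by (try apply H; unfold a in *; lra).
        fold a. pose proof (G0 G g (H 0 (Rle_refl 0))) as hG0.
        pose proof (G_lip G g Cap 0 (y - a) H Hb ltac:(lra)) as H1.
        assert (kx * Vx * (a - x) <= kx * Vx * (y - x)) by (apply Rmult_le_compat_l; lra).
        assert (0 <= kx * Vx * (a - x)) by (apply Rmult_le_pos; lra).
        assert (Cap * (y - a - 0) <= Cap * (y - x)) by (apply Rmult_le_compat_l; lra).
        replace ((kx * Vx + 2 * Cap) * (y - x)) with (kx * Vx * (y - x) + 2 * (Cap * (y - x))) by ring.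
        rewrite e1.
        replace (G (y - a) - G y + kx * Vx * a - (kx * Vx * x - G x))
          with ((G (y - a) - 0) + kx * Vx * (a - x) - (G y - G x)) by ring.
        lra.
      + rewrite !(Q_ge L Vx kx G g) by (try apply H; unfold a in *; lra).
        fold a.
        pose proof (G_lip G g Cap (x - a) (y - a) H Hb ltac:(lra)).
        replace (y - a - (x - a)) with (y - x) in H1 by ring.
        assert (0 <= kx * Vx * (y - x)) by (apply Rmult_le_pos; lra).
        replace ((kx * Vx + 2 * Cap) * (y - x)) with (kx * Vx * (y - x) + 2 * (Cap * (y - x))) by ring.
        lra. }
  intros hx hy. destruct (Rle_dec x y).
  - apply key; lra.
  - rewrite Rabs_minus_sym, (Rabs_minus_sym y x). apply key; lra.
Qed.

Lemma Q_mono L Vx kx (G g : R -> R) x y : 0 < Vx -> 0 < L ->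
  (forall t, 0 <= t -> is_RInt g 0 t (G t)) ->
  (forall u, 0 <= u -> queue L Vx kx G u <= 0 -> g u <= inflow L Vx kx g u) ->
  0 <= x <= y -> (forall u, x < u <= y -> queue L Vx kx G u <= 0) ->
  queue L Vx kx G x <= queue L Vx kx G y.
Proof.
  intros hV hL H Hin.
  set (a := L / Vx). assert (ha : 0 < a) by (apply Rdiv_lt_0_compat; lra).
  assert (c1 : forall x y, 0 <= x <= y -> y <= a -> (forall u, x < u <= y -> queue L Vx kx G u <= 0) ->
    queue L Vx kx G x <= queue L Vx kx G y).
  { clear x y. intros x y hxy hya Hq.
    rewrite !(Q_le L Vx kx G) by (unfold a in *; lra).
    pose proof (int_le g x y _ (kx * Vx) ltac:(lra) (Gdiff G g x y H ltac:(lra) ltac:(lra))).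
    assert (kx * Vx * (y - x) >= G y - G x); [|lra].
    apply Rle_ge, H0. intros u hu.
    pose proof (Hin u ltac:(lra) (Hq u ltac:(lra))).
    unfold inflow in H1. destruct Rle_dec; [exact H1|]. exfalso. fold a in n. lra. }
  assert (c2 : forall x y, 0 <= x <= y -> a <= x -> (forall u, x < u <= y -> queue L Vx kx G u <= 0) ->
    queue L Vx kx G x <= queue L Vx kx G y).
  { clear x y. intros x y hxy hax Hq.
    rewrite !(Q_ge L Vx kx G g) by (try apply H; unfold a in *; lra). fold a.
    assert (h1 : is_RInt g (1 * x + - a) (1 * y + - a) (G (y - a) - G (x - a))).
    { replace (1 * x + - a) with (x - a) by ring. replace (1 * y + - a) with (y - a) by ring.
      apply Gdiff; [exact H|lra|lra]. }
    apply is_RInt_comp_lin in h1.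
    pose proof (is_RInt_le _ _ x y _ _ ltac:(lra) (Gdiff G g x y H ltac:(lra) ltac:(lra)) h1).
    assert (G y - G x <= G (y - a) - G (x - a)); [|lra].
    apply H0. intros u hu.
    pose proof (Hin u ltac:(lra) (Hq u ltac:(lra))).
    unfold inflow in H1. destruct Rle_dec as [r|r]; [fold a in r; lra|].
    fold a in H1. change (scal 1 (g (1 * u + - a))) with (1 * g (1 * u + - a)). rewrite Rmult_1_l. replace (1 * u + - a) with (u - a) by ring. exact H1. }
  intros hxy Hq.
  destruct (Rle_dec y a).
  - apply c1; assumption.
  - destruct (Rle_dec a x).
    + apply c2; assumption.
    + apply Rle_trans with (queue L Vx kx G a).
      * apply c1; [lra|lra|]. intros u hu; apply Hq; lra.
      * apply c2; [lra|lra|]. intros u hu; apply Hq; lra.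
Qed.

Lemma Q_nonneg L Vx kx Cap (G g : R -> R) t : 0 < Vx -> 0 < L -> 0 <= kx ->
  (forall t, 0 <= t -> is_RInt g 0 t (G t)) ->
  (forall t, 0 <= t -> 0 <= g t <= Cap) ->
  (forall u, 0 <= u -> queue L Vx kx G u <= 0 -> g u <= inflow L Vx kx g u) ->
  0 <= t -> 0 <= queue L Vx kx G t.
Proof.
  intros hV hL hk H Hb Hin ht.
  destruct (Rle_lt_dec 0 (queue L Vx kx G t)) as [h|h]; [exact h|exfalso].
  assert (ha : 0 < L / Vx) by (apply Rdiv_lt_0_compat; lra).
  assert (hq0 : queue L Vx kx G 0 = 0).
  { rewrite (Q_le L Vx kx G) by lra. rewrite (G0 G g (H 0 (Rle_refl 0))). ring. }
  destruct (crossing (queue L Vx kx G) (kx * Vx + 2 * Cap) 0 t ht ltac:(lra)) as [c [hc [hfc hs]]].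
  { intros x y hx hy. apply (Q_lip L Vx kx Cap G g); try assumption; lra. }
  assert (hct : c < t) by (destruct (Req_dec c t); [subst; lra|lra]).
  pose proof (Q_mono L Vx kx G g c t hV hL H Hin ltac:(lra)
    ltac:(intros u hu; left; apply hs; lra)). lra.
Qed.

Lemma Q_drop L Vx kx Cap (G g : R -> R) c t : 0 < Vx -> 0 < L ->
  (forall t, 0 <= t -> is_RInt g 0 t (G t)) ->
  (forall t, 0 <= t -> 0 <= g t <= Cap) ->
  L / Vx <= c <= t -> (forall u, c < u < t -> g u = Cap) ->
  queue L Vx kx G t <= queue L Vx kx G c.
Proof.
  intros hV hL H Hb hc Hu.
  assert (ha : 0 < L / Vx) by (apply Rdiv_lt_0_compat; lra).
  rewrite !(Q_ge L Vx kx G g) by (try apply H; lra).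
  pose proof (G_lip G g Cap (c - L / Vx) (t - L / Vx) H Hb ltac:(lra)).
  replace (t - L / Vx - (c - L / Vx)) with (t - c) in H0 by ring.
  pose proof (int_ge g c t _ Cap ltac:(lra) (Gdiff G g c t H ltac:(lra) ltac:(lra))
    ltac:(intros u hu; rewrite Hu; lra)).
  lra.
Qed.

Theorem theorem2p1 (L V W K k0 T p : R) (G g : R -> R) :
  0 < L -> 0 < V -> 0 < W -> 0 < K -> 0 <= k0 <= K -> 0 < T -> 0 < p < 1 ->
  LTM_solution L V W K k0 T p G g ->
  exists t0 : R, forall t : R, t0 <= t -> forall i : nat,
    (0 < t - INR i * T <= p * T ->
       G t = Rmin (Rmin (G (t - L / V) + k0 * L) (G (t - L / W) + (K - k0) * L))
                  (G (INR i * T) + (t - INR i * T) * capacity V W K)) /\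
    (p * T < t - INR i * T <= T ->
       G t = G ((INR i + p) * T)).
Proof.
  intros hL hV hW hK hk hT hp [Hint Hg].
  assert (hC : 0 < capacity V W K).
  { unfold capacity; apply Rmult_lt_0_compat; [lra|].
    apply Rmult_lt_0_compat; [apply Rdiv_lt_0_compat; lra | lra]. }
  assert (haV : 0 < L / V) by (apply Rdiv_lt_0_compat; lra).
  assert (haW : 0 < L / W) by (apply Rdiv_lt_0_compat; lra).
  assert (hk0V : 0 <= k0 * V) by (apply Rmult_le_pos; lra).
  assert (hkW : 0 <= (K - k0) * W) by (apply Rmult_le_pos; lra).
  assert (hgC : forall t, 0 <= t -> g t <= capacity V W K).
  { intros t ht. destruct (Hg t ht) as [h1 h2].
    destruct (classic (green T p t)) as [hgr|hgr].
    - rewrite (h1 hgr). eapply Rle_trans; [apply Rmin_l|]. unfold demand.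
      destruct Rlt_dec; [lra|]. destruct Rle_dec; apply Rmin_r.
    - rewrite (h2 hgr); lra. }
  set (d := Rmin (L / V) (L / W)).
  assert (hd : 0 < d) by (unfold d; apply Rmin_glb_lt; lra).
  assert (hd1 : d <= L / V) by apply Rmin_l.
  assert (hd2 : d <= L / W) by apply Rmin_r.
  assert (step : forall t, 0 <= t -> (L / V < t -> 0 <= g (t - L / V)) ->
     (L / W < t -> 0 <= g (t - L / W)) -> 0 <= g t).
  { intros t ht H0 H1. destruct (Hg t ht) as [h1 h2].
    destruct (classic (green T p t)) as [hgr|hgr].
    - rewrite (h1 hgr). apply Rmin_glb; [unfold demand | unfold supply];
        destruct Rlt_dec; try lra; destruct Rle_dec; apply Rmin_glb; try lra;
        try (apply H0; lra); try (apply H1; lra).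
    - rewrite (h2 hgr); lra. }
  assert (ind : forall n : nat, forall t, 0 <= t <= INR n * d -> 0 <= g t).
  { induction n as [|n IH]; intros t ht.
    - simpl in ht. apply step; intros; lra.
    - rewrite S_INR in ht.
      assert (INR n * d + d = (INR n + 1) * d) by ring.
      apply step; [lra| |]; intros; apply IH; lra. }
  assert (gnn : forall t, 0 <= t -> 0 <= g t).
  { intros t ht. destruct (nat_unbounded (t / d)) as [n hn]. apply (ind n). split; [lra|].
    assert (t / d * d = t) by (field; lra).
    assert (t / d * d < INR n * d) by (apply Rmult_lt_compat_r; lra). lra. }
  assert (Hb : forall t, 0 <= t -> 0 <= g t <= capacity V W K).
  { intros t ht; split; [apply gnn|apply hgC]; exact ht. }
  assert (HinV : forall u, 0 <= u -> queue L V k0 G u <= 0 -> g u <= inflow L V k0 g u).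
  { intros u hu hq. destruct (Hg u hu) as [h1 h2].
    destruct (classic (green T p u)) as [hgr|hgr].
    - rewrite (h1 hgr). eapply Rle_trans; [apply Rmin_l|]. unfold demand, inflow.
      destruct Rlt_dec; [lra|]. destruct Rle_dec; apply Rmin_l.
    - rewrite (h2 hgr). unfold inflow. destruct Rle_dec; [lra|apply gnn; lra]. }
  assert (HinW : forall u, 0 <= u -> queue L W (K - k0) G u <= 0 -> g u <= inflow L W (K - k0) g u).
  { intros u hu hq. destruct (Hg u hu) as [h1 h2].
    destruct (classic (green T p u)) as [hgr|hgr].
    - rewrite (h1 hgr). eapply Rle_trans; [apply Rmin_r|]. unfold supply, inflow.
      change (vacancy L W K k0 G u) with (queue L W (K - k0) G u).
      destruct Rlt_dec; [lra|]. destruct Rle_dec; apply Rmin_l.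
    - rewrite (h2 hgr). unfold inflow. destruct Rle_dec; [lra|apply gnn; lra]. }
  assert (QV : forall t, 0 <= t -> 0 <= queue L V k0 G t).
  { intros t ht. apply (Q_nonneg L V k0 (capacity V W K) G g); try assumption; lra. }
  assert (QW : forall t, 0 <= t -> 0 <= queue L W (K - k0) G t).
  { intros t ht. apply (Q_nonneg L W (K - k0) (capacity V W K) G g); try assumption; lra. }
  assert (hpT : p * T < T) by nra.
  exists (L / V + L / W + T). intros t ht i. split.
  - intros [h1 h2].
    set (s0 := INR i * T) in *.
    assert (hs0 : L / V + L / W < s0) by lra.
    assert (hgreen : forall u, s0 <= u <= t -> green T p u).
    { intros u hu. exists i. fold s0. lra. }
    assert (HC : forall u, s0 <= u <= t -> 0 < queue L V k0 G u ->
              0 < queue L W (K - k0) G u -> g u = capacity V W K).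
    { intros u hu q1 q2. destruct (Hg u ltac:(lra)) as [e _].
      rewrite (e (hgreen u hu)). unfold demand, supply.
      change (vacancy L W K k0 G u) with (queue L W (K - k0) G u).
      destruct (Rlt_dec 0 (queue L V k0 G u)); [|contradiction].
      destruct (Rlt_dec 0 (queue L W (K - k0) G u)); [|contradiction].
      apply Rmin_left; lra. }
    set (A := queue L V k0 G t). set (B := queue L W (K - k0) G t).
    set (D := G s0 + (t - s0) * capacity V W K - G t).
    assert (eA : G (t - L / V) + k0 * L = G t + A).
    { unfold A. rewrite (Q_ge L V k0 G g) by (try apply Hint; lra). ring. }
    assert (eB : G (t - L / W) + (K - k0) * L = G t + B).
    { unfold B. rewrite (Q_ge L W (K - k0) G g) by (try apply Hint; lra). ring. }
    assert (eD : G s0 + (t - s0) * capacity V W K = G t + D) by (unfold D; ring).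
    assert (hA : 0 <= A) by (apply QV; lra).
    assert (hB : 0 <= B) by (apply QW; lra).
    assert (hD : 0 <= D).
    { pose proof (G_lip G g _ s0 t Hint Hb ltac:(lra)). unfold D. lra. }
    assert (key : A = 0 \/ B = 0 \/ D = 0).
    { destruct (classic (exists u, s0 <= u <= t /\
                 Rmin (queue L V k0 G u) (queue L W (K - k0) G u) <= 0)) as [[u [hu hm]]|hno].
      - destruct (crossing (fun v => - Rmin (queue L V k0 G v) (queue L W (K - k0) G v))
          ((k0 * V + 2 * capacity V W K) + ((K - k0) * W + 2 * capacity V W K)) u t
          ltac:(lra) ltac:(lra)) as [c [hc [hfc hs]]].
        { intros x y hx hy.
          replace (- Rmin (queue L V k0 G y) (queue L W (K - k0) G y) -
                   - Rmin (queue L V k0 G x) (queue L W (K - k0) G x))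
            with (- (Rmin (queue L V k0 G y) (queue L W (K - k0) G y) -
                   Rmin (queue L V k0 G x) (queue L W (K - k0) G x))) by ring.
          rewrite Rabs_Ropp.
          eapply Rle_trans; [apply Rmin_lip|].
          pose proof (Q_lip L V k0 _ G g x y hV hL ltac:(lra) Hint Hb ltac:(lra) ltac:(lra)).
          pose proof (Q_lip L W (K - k0) _ G g x y hW hL ltac:(lra) Hint Hb ltac:(lra) ltac:(lra)).
          lra. }
        assert (hgc : forall v, c < v < t -> g v = capacity V W K).
        { intros v hv. pose proof (hs v ltac:(lra)). simpl in H.
          apply HC; [lra| |].
          - pose proof (Rmin_l (queue L V k0 G v) (queue L W (K - k0) G v)). lra.
          - pose proof (Rmin_r (queue L V k0 G v) (queue L W (K - k0) G v)). lra. }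
        pose proof (Q_drop L V k0 _ G g c t hV hL Hint Hb ltac:(lra) hgc).
        pose proof (Q_drop L W (K - k0) _ G g c t hW hL Hint Hb ltac:(lra) hgc).
        simpl in hfc. fold A B in H, H0. revert hfc. unfold Rmin. destruct Rle_dec; intros; lra.
      - right; right.
        assert (hpos : forall v, s0 <= v <= t -> 0 < queue L V k0 G v /\ 0 < queue L W (K - k0) G v).
        { intros v hv.
          destruct (Rle_lt_dec (Rmin (queue L V k0 G v) (queue L W (K - k0) G v)) 0) as [h|h].
          - exfalso; apply hno; exists v; split; assumption.
          - pose proof (Rmin_l (queue L V k0 G v) (queue L W (K - k0) G v)).
            pose proof (Rmin_r (queue L V k0 G v) (queue L W (K - k0) G v)). lra. }
        pose proof (int_ge g s0 t _ (capacity V W K) ltac:(lra) (Gdiff G g s0 t Hint ltac:(lra) ltac:(lra))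
          ltac:(intros v hv; destruct (hpos v ltac:(lra)); rewrite HC; lra)).
        unfold D. lra. }
    rewrite eA, eB, eD. unfold Rmin. repeat destruct Rle_dec; lra.
  - intros [h1 h2].
    assert (hi : 0 <= INR i) by apply pos_INR.
    assert (e1 : (INR i + p) * T = INR i * T + p * T) by ring.
    assert (hs1 : 0 <= (INR i + p) * T) by (apply Rmult_le_pos; lra).
    assert (hz : forall v, (INR i + p) * T < v < t -> g v = 0).
    { intros v hv. destruct (Hg v ltac:(lra)) as [_ e]. apply e.
      intros [j [hj1 hj2]]. destruct (le_lt_dec j i) as [hji|hji].
      - apply le_INR in hji.
        assert (INR j * T <= INR i * T) by (apply Rmult_le_compat_r; lra). lra.
      - apply (le_INR (S i) j) in hji. rewrite S_INR in hji.
        assert ((INR i + 1) * T <= INR j * T) by (apply Rmult_le_compat_r; lra). lra. }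
    pose proof (Gdiff G g ((INR i + p) * T) t Hint hs1 ltac:(lra)).
    assert (hz' : forall v, (INR i + p) * T < v < t -> g v <= 0 /\ 0 <= g v).
    { intros v hv. rewrite (hz v hv). lra. }
    pose proof (int_le g ((INR i + p) * T) t _ 0 ltac:(lra) H ltac:(intros v hv; apply hz'; exact hv)).
    pose proof (int_ge g ((INR i + p) * T) t _ 0 ltac:(lra) H ltac:(intros v hv; apply hz'; exact hv)).
    rewrite Rmult_0_l in H0, H1. lra.
Qed.
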